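(* Let $t\in\{w,m\}$ index two types of individuals, with exogenous masses $\mu_w>0,\mu_m>0$, and let $r:=\mu_w/\mu_m$. For each type $t$, let $\Delta_t:=Y_{1t}-Y_{2t}$ (difference of random potential incomes in sectors 1 and 2) have cumulative distribution function $F_{\Delta_t}$, and let $h_t:(0,1)\to[0,\infty)$. Assume that for each $t$: $h_t$ is decreasing and continuously differentiable; $F_{\Delta_t}$ is continuously differentiable with a continuous inverse $F_{\Delta_t}^{-1}$; and $\mathbb P[\Delta_t>0]\in(0,1)$. Define the efficient compositions $r^e_t:=\mathbb P[\Delta_t>0]$, $t\in\{w,m\}$. If $r^e_w<r^e_m$, then there exists an equilibrium $(r_w^*,r_m^* )$ such that $r_w^*<r_w^e<r_m^e<r_m^*$. Moreover, there is no equilibrium $(r_w^*,r_m^* )$ such that $r_w^e<r_w^*<r_m^*<r_m^e$.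
   Context: For $x,y\in(0,1)$, $z>0$, define $g_t(x,y,z):=h_t\left(\frac{1}{1+z y/x}\right)-h_t\left(\frac{1}{1+z(1-y)/(1-x)}\right)$. A composition is a pair $(r_w,r_m)\in[0,1]^2$, $r_t$ being the share of type-$t$ individuals in sector 1. An equilibrium is a composition $(r_w^*,r_m^* )$ such that: (i) if $r_w^*\in(0,1)$ then $F_{\Delta_w}^{-1}(1-r_w^* )=g_w(r_w^*,r_m^*,1/r)$, and if $r_m^*\in(0,1)$ then $F_{\Delta_m}^{-1}(1-r_m^* )=g_m(r_m^*,r_w^*,r)$; (ii) if $r_w^*=0$, there is $\bar\delta>0$ such that for all $0<\delta<\bar\delta$, $F_{\Delta_w}^{-1}(1-\delta)\le g_w(\delta,r_m^*,1/r)$; (iii) if $r_m^*=1$, there is $\bar\delta>0$ such that for all $0<\delta<\bar\delta$, $F_{\Delta_m}^{-1}(\delta)\ge g_m(1-\delta,r_w^*,r)$; (iv) symmetrically, if $r_w^*=1$, there is $\bar\delta>0$ such that for all $0<\delta<\bar\delta$, $F_{\Delta_w}^{-1}(\delta)\ge g_w(1-\delta,r_m^*,1/r)$, and if $r_m^*=0$, there is $\bar\delta>0$ such that for all $0<\delta<\bar\delta$, $F_{\Delta_m}^{-1}(1-\delta)\le g_m(\delta,r_w^*,r)$. *)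

(* Defs.v *)
From Stdlib Require Import Reals.
From Coquelicot Require Import Coquelicot.
Open Scope R_scope.

Definition is_cdf (F : R -> R) : Prop :=
  (forall x y, x <= y -> F x <= F y) /\
  (forall x, filterlim F (at_right x) (locally (F x))) /\
  is_lim F m_infty 0 /\
  is_lim F p_infty 1.

Definition quantile (F : R -> R) (u : R) : R :=
  real (Glb_Rbar (fun x => u <= F x)).

(* h : (0,1) -> [0,oo) is represented by a total function; the only point
   outside (0,1) at which g evaluates h is 1 (at corner compositions), where
   h is extended by its left limit inf_{0<s<1} h(s). *)
Definition hbar (h : R -> R) (x : R) : R :=
  if Rlt_dec x 1 then h x
  else real (Glb_Rbar (fun y => exists s, 0 < s < 1 /\ y = h s)).

Definition g (h : R -> R) (x y z : R) : R :=
  hbar h (1 / (1 + z * y / x)) - hbar h (1 / (1 + z * (1 - y) / (1 - x))).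

Definition equilibrium (Fw Fm hw hm : R -> R) (r rw rm : R) : Prop :=
  0 <= rw <= 1 /\ 0 <= rm <= 1 /\
  (0 < rw < 1 -> quantile Fw (1 - rw) = g hw rw rm (1 / r)) /\
  (0 < rm < 1 -> quantile Fm (1 - rm) = g hm rm rw r) /\
  (rw = 0 -> exists db, 0 < db /\
     forall d, 0 < d < db -> quantile Fw (1 - d) <= g hw d rm (1 / r)) /\
  (rm = 1 -> exists db, 0 < db /\
     forall d, 0 < d < db -> quantile Fm d >= g hm (1 - d) rw r) /\
  (rw = 1 -> exists db, 0 < db /\
     forall d, 0 < d < db -> quantile Fw d >= g hw (1 - d) rm (1 / r)) /\
  (rm = 0 -> exists db, 0 < db /\
     forall d, 0 < d < db -> quantile Fm (1 - d) <= g hm d rw r).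

Definition h_assumptions (h : R -> R) : Prop :=
  (forall x, 0 < x < 1 -> 0 <= h x) /\
  (forall x y, 0 < x -> x < y -> y < 1 -> h y < h x) /\
  (forall x, 0 < x < 1 -> ex_derive h x /\ continuous (Derive h) x).

(* Standing assumptions on F_{Delta_t}: a CDF, continuously differentiable,
   with continuous inverse on (0,1), and P[Delta_t > 0] = 1 - F(0) in (0,1). *)
Definition F_assumptions (F : R -> R) : Prop :=
  is_cdf F /\
  (forall x, ex_derive F x /\ continuous (Derive F) x) /\
  (forall u, 0 < u < 1 -> continuous (quantile F) u) /\
  0 < 1 - F 0 < 1.

(* Main.v *)
Require Import Defs.
From Stdlib Require Import Reals Lra Classical ClassicalEpsilon.
From Coquelicot Require Import Coquelicot.
Open Scope R_scope.

Definition ctn (f : R -> R) (x : R) := forall eps, 0 < eps ->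
  exists d, 0 < d /\ forall y, Rabs (y - x) < d -> Rabs (f y - f x) < eps.

Lemma cont_ctn f x : continuous f x -> ctn f x.
Proof.
  intros H. apply continuity_pt_filterlim in H.
  intros eps Heps. destruct (H eps Heps) as [d [Hd Hy]].
  exists d; split; auto. intros y Hy'.
  destruct (Req_dec y x) as [->|Hne].
  - rewrite Rminus_eq_0, Rabs_R0; auto.
  - apply (Hy y). split; [split; [exact I| auto] | exact Hy'].
Qed.

Definition charS (f : R -> R) a b xs := a <= xs < b /\
  ((xs = a /\ forall x, a < x <= b -> f x < 0) \/
   (a < xs /\ f xs = 0 /\ forall x, xs < x <= b -> f x < 0)).

Definition charI (f : R -> R) a b xs := a < xs <= b /\
  ((xs = b /\ forall x, a <= x < b -> 0 < f x) \/
   (xs < b /\ f xs = 0 /\ forall x, a <= x < xs -> 0 < f x)).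

Lemma sup_zero (f : R -> R) a b : a < b -> (forall x, a < x <= b -> ctn f x) ->
  f b < 0 -> exists xs, charS f a b xs.
Proof.
  intros Hab Hc Hb.
  destruct (classic (exists x, a < x <= b /\ 0 <= f x)) as [Hex|Hno].
  2:{ exists a. split; [lra|]. left. split; auto. intros x Hx.
      apply Rnot_le_lt. intros H. apply Hno. exists x; split; auto. }
  set (E := fun x => a < x <= b /\ 0 <= f x).
  assert (HB : bound E) by (exists b; intros x [Hx _]; lra).
  destruct (completeness E HB Hex) as [s [Hub Hlub]].
  destruct Hex as [x0 Hx0].
  assert (Hs1 : x0 <= s) by (apply Hub; exact Hx0).
  assert (Hs2 : s <= b) by (apply Hlub; intros x [Hx _]; lra).
  assert (Has : a < s) by (destruct Hx0; lra).
  assert (Hfs : 0 <= f s).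
  { apply Rnot_lt_le; intros Hneg.
    destruct (Hc s ltac:(lra) (- f s) ltac:(lra)) as [d [Hd Hd']].
    destruct (classic (exists x, E x /\ s - d < x)) as [[x [Ex Hx]]|Hn].
    - assert (x <= s) by (apply Hub; auto).
      assert (Rabs (x - s) < d) by (apply Rabs_def1; lra).
      specialize (Hd' x H0). apply Rabs_def2 in Hd'. destruct Ex. lra.
    - assert (s <= s - d). { apply Hlub. intros x Ex. apply Rnot_lt_le. intros Hl. apply Hn. eauto. }
      lra. }
  assert (Hsb : s < b) by (destruct (Req_dec s b); [subst; lra| lra]).
  exists s. split; [lra|]. right. split; [lra|]. split.
  - apply Rle_antisym; auto. apply Rnot_lt_le; intros Hpos.
    destruct (Hc s ltac:(lra) (f s) Hpos) as [d [Hd Hd']].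
    set (x := Rmin (s + d/2) b).
    assert (Hx1 : s < x) by (unfold x; apply Rmin_case; lra).
    assert (Hx2 : x <= s + d/2) by apply Rmin_l.
    assert (Hx3 : x <= b) by apply Rmin_r.
    assert (Rabs (x - s) < d) by (apply Rabs_def1; lra).
    specialize (Hd' x H). apply Rabs_def2 in Hd'.
    assert (x <= s) by (apply Hub; split; [lra|lra]). lra.
  - intros x Hx. apply Rnot_le_lt. intros H.
    assert (x <= s) by (apply Hub; split; [lra|lra]). lra.
Qed.

Lemma inf_zero (f : R -> R) a b : a < b -> (forall x, a <= x < b -> ctn f x) ->
  0 < f a -> exists xs, charI f a b xs.
Proof.
  intros Hab Hc Ha.
  destruct (sup_zero (fun t => - f (- t)) (-b) (-a)) as [xs [Hxs H]].
  - lra.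
  - intros x Hx eps Heps. destruct (Hc (-x) ltac:(lra) eps Heps) as [d [Hd Hd']].
    exists d; split; auto. intros y Hy.
    replace (- f (- y) - - f (- x)) with (- (f (-y) - f (-x))) by ring.
    rewrite Rabs_Ropp. apply Hd'. replace (-y - - x) with (- (y - x)) by ring.
    rewrite Rabs_Ropp; auto.
  - rewrite Ropp_involutive. lra.
  - exists (- xs). split; [lra|]. destruct H as [[H1 H2]|[H1 [H2 H3]]].
    + left. split; [lra|]. intros x Hx. specialize (H2 (-x) ltac:(lra)).
      rewrite Ropp_involutive in H2. lra.
    + right. split; [lra|]. split; [lra|]. intros x Hx. specialize (H3 (-x) ltac:(lra)).
      rewrite Ropp_involutive in H3. lra.
Qed.

Lemma sup_mono f1 f2 a b x1 x2 : (forall x, a < x <= b -> f2 x <= f1 x) ->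
  charS f1 a b x1 -> charS f2 a b x2 -> x2 <= x1.
Proof.
  intros Hf [Hx1 H1] [Hx2 H2].
  destruct H2 as [[-> _]|[Ha [Hz _]]]; [lra|].
  apply Rnot_lt_le; intros Hlt.
  destruct H1 as [[-> H1]|[_ [_ H1]]].
  - specialize (H1 x2 ltac:(lra)). specialize (Hf x2 ltac:(lra)). lra.
  - specialize (H1 x2 ltac:(lra)). specialize (Hf x2 ltac:(lra)). lra.
Qed.

Lemma inf_mono f1 f2 a b x1 x2 : (forall x, a <= x < b -> f2 x <= f1 x) ->
  charI f1 a b x1 -> charI f2 a b x2 -> x2 <= x1.
Proof.
  intros Hf [Hx1 H1] [Hx2 H2].
  destruct H1 as [[-> _]|[Hb [Hz _]]]; [lra|].
  apply Rnot_lt_le; intros Hlt.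
  destruct H2 as [[-> H2]|[_ [_ H2]]].
  - specialize (H2 x1 ltac:(lra)). specialize (Hf x1 ltac:(lra)). lra.
  - specialize (H2 x1 ltac:(lra)). specialize (Hf x1 ltac:(lra)). lra.
Qed.

Lemma tarski (T : R -> R) a b : a <= b -> (forall y, a <= y <= b -> a <= T y <= b) ->
  (forall y y', a <= y -> y <= y' -> y' <= b -> T y <= T y') ->
  exists y, a <= y <= b /\ T y = y.
Proof.
  intros Hab HT Hm.
  set (E := fun y => a <= y <= b /\ y <= T y).
  assert (HB : bound E) by (exists b; intros x [Hx _]; lra).
  assert (Hex : exists x, E x) by (exists a; split; [lra| apply HT; lra]).
  destruct (completeness E HB Hex) as [s [Hub Hlub]].
  assert (Has : a <= s) by (apply Hub; destruct Hex as [x Hx]; split; [lra| apply HT; lra]).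
  assert (Hsb : s <= b) by (apply Hlub; intros x [Hx _]; lra).
  assert (H1 : s <= T s).
  { apply Hlub. intros y [Hy Hy']. specialize (Hub y). 
    assert (y <= s) by (apply Hub; split; auto). pose proof (Hm y s ltac:(lra) H ltac:(lra)). lra. }
  assert (H2 : T s <= s).
  { apply Hub. pose proof (HT s ltac:(lra)). split; [lra|]. apply Hm; lra. }
  exists s. split; [lra|lra].
Qed.

Lemma my_choice {A B : Type} (P : A -> B -> Prop) :
  (forall a, exists b, P a b) -> exists f : A -> B, forall a, P a (f a).
Proof.
  intros H. exists (fun a => proj1_sig (constructive_indefinite_description _ (H a))).
  intros a. exact (proj2_sig (constructive_indefinite_description _ (H a))).
Qed.
Lemma hbar_eq h s : s < 1 -> hbar h s = h s.
Proof. intros H. unfold hbar. destruct (Rlt_dec s 1); [auto| lra]. Qed.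

Lemma hbar1 h : h_assumptions h -> exists l, hbar h 1 = l /\ 0 <= l /\ forall s, 0 < s < 1 -> l <= h s.
Proof.
  intros [H0 [Hd _]]. unfold hbar. destruct (Rlt_dec 1 1) as [Hc|_]; [lra|].
  destruct (Glb_Rbar_correct (fun y => exists s, 0 < s < 1 /\ y = h s)) as [lb glb].
  assert (L0 : Rbar_le 0 (Glb_Rbar (fun y => exists s, 0 < s < 1 /\ y = h s))).
  { apply glb. intros y [s [Hs ->]]. simpl. apply H0; auto. }
  assert (L1 : Rbar_le (Glb_Rbar (fun y => exists s, 0 < s < 1 /\ y = h s)) (h (1/2))).
  { apply lb. exists (1/2). split; [lra|auto]. }
  destruct (Glb_Rbar _) as [l| |] eqn:E; simpl in L0, L1; try contradiction.
  exists l. simpl. split; auto. split; auto. intros s Hs.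
  apply (lb (h s)). exists s; auto.
Qed.

Lemma hbar_santi h a b : h_assumptions h -> 0 < a -> a < b -> b <= 1 -> hbar h b < hbar h a.
Proof.
  intros Hh Ha Hab Hb. pose proof Hh as [_ [Hd _]].
  rewrite (hbar_eq h a) by lra.
  destruct (Req_dec b 1) as [->|Hne].
  - destruct (hbar1 h Hh) as [l [-> [_ Hl]]].
    specialize (Hl ((a+1)/2) ltac:(lra)). specialize (Hd a ((a+1)/2) Ha ltac:(lra) ltac:(lra)). lra.
  - rewrite hbar_eq by lra. apply Hd; lra.
Qed.

Lemma hbar_anti h a b : h_assumptions h -> 0 < a -> a <= b -> b <= 1 -> hbar h b <= hbar h a.
Proof.
  intros Hh Ha Hab Hb. destruct (Req_dec a b) as [->|]; [lra|].
  left. apply hbar_santi; auto; lra.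
Qed.

Lemma hbar_cont h s : h_assumptions h -> 0 < s < 1 -> continuous (hbar h) s.
Proof.
  intros [_ [_ Hc]] Hs. apply continuous_ext_loc with (g := h).
  - assert (Hp : 0 < Rmin s (1 - s)) by (apply Rmin_case; lra).
    exists (mkposreal _ Hp). intros y Hy. unfold ball in Hy; simpl in Hy.
    unfold AbsRing_ball, abs, minus, plus, opp in Hy; simpl in Hy.
    apply Rabs_def2 in Hy. pose proof (Rmin_r s (1-s)). rewrite hbar_eq; [auto|lra].
  - exact (ex_derive_continuous h s (proj1 (Hc s Hs))).
Qed.

Lemma arg_in k : 0 < k -> 0 < 1 / (1 + k) < 1.
Proof.
  intros Hk. split; [apply Rdiv_lt_0_compat; lra|].
  unfold Rdiv; rewrite Rmult_1_l. rewrite <- Rinv_1. apply Rinv_lt_contravar; lra.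
Qed.

Lemma inv_anti k k' : 0 <= k -> k <= k' -> 1 / (1 + k') <= 1 / (1 + k).
Proof. intros. unfold Rdiv; rewrite !Rmult_1_l. apply Rinv_le_contravar; lra. Qed.

Lemma inv_santi k k' : 0 <= k -> k < k' -> 1 / (1 + k') < 1 / (1 + k).
Proof. intros. unfold Rdiv; rewrite !Rmult_1_l. apply Rinv_lt_contravar; [apply Rmult_lt_0_compat|]; lra. Qed.

Lemma arg_le1 k : 0 <= k -> 1 / (1 + k) <= 1.
Proof. intros. replace 1 with (1 / (1 + 0)) at 3 by field. apply inv_anti; lra. Qed.

Lemma div_nonneg z y x : 0 < z -> 0 <= y -> 0 < x -> 0 <= z * y / x.
Proof.
  intros. unfold Rdiv. apply Rmult_le_pos; [apply Rmult_le_pos; lra|].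
  left; apply Rinv_0_lt_compat; auto.
Qed.

Lemma g_mono h z x y y' : h_assumptions h -> 0 < z -> 0 < x < 1 -> 0 <= y -> y <= y' -> y' <= 1 ->
  g h x y z <= g h x y' z.
Proof.
  intros Hh Hz Hx Hy Hyy Hy'. unfold g.
  assert (K1 : z * y / x <= z * y' / x).
  { unfold Rdiv. apply Rmult_le_compat_r; [left; apply Rinv_0_lt_compat; lra|].
    apply Rmult_le_compat_l; lra. }
  assert (K2 : z * (1 - y') / (1 - x) <= z * (1 - y) / (1 - x)).
  { unfold Rdiv. apply Rmult_le_compat_r; [left; apply Rinv_0_lt_compat; lra|].
    apply Rmult_le_compat_l; lra. }
  pose proof (div_nonneg z y x Hz Hy ltac:(lra)).
  pose proof (div_nonneg z (1 - y') (1 - x) Hz ltac:(lra) ltac:(lra)).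
  assert (A1 : hbar h (1 / (1 + z * y / x)) <= hbar h (1 / (1 + z * y' / x))).
  { apply hbar_anti; auto.
    - apply Rdiv_lt_0_compat; lra.
    - apply inv_anti; lra.
    - apply arg_le1; lra. }
  assert (A2 : hbar h (1 / (1 + z * (1 - y') / (1 - x))) <= hbar h (1 / (1 + z * (1 - y) / (1 - x)))).
  { apply hbar_anti; auto.
    - apply Rdiv_lt_0_compat; lra.
    - apply inv_anti; lra.
    - apply arg_le1; lra. }
  lra.
Qed.

Lemma g_pos h z x y : h_assumptions h -> 0 < z -> 0 < x < 1 -> y <= 1 -> x < y -> 0 < g h x y z.
Proof.
  intros Hh Hz Hx Hy Hxy. unfold g.
  assert (E : z * y / x - z * (1 - y) / (1 - x) = z * (y - x) / (x * (1 - x))) by (field; lra).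
  assert (P : 0 < z * (y - x) / (x * (1 - x))).
  { apply Rdiv_lt_0_compat; apply Rmult_lt_0_compat; lra. }
  pose proof (div_nonneg z (1 - y) (1 - x) Hz ltac:(lra) ltac:(lra)).
  assert (hbar h (1 / (1 + z * (1 - y) / (1 - x))) < hbar h (1 / (1 + z * y / x))).
  { apply hbar_santi; auto.
    - apply Rdiv_lt_0_compat; lra.
    - apply inv_santi; lra.
    - apply arg_le1; lra. }
  lra.
Qed.

Lemma g_neg h z x y : h_assumptions h -> 0 < z -> 0 < x < 1 -> 0 <= y -> y < x -> g h x y z < 0.
Proof.
  intros Hh Hz Hx Hy Hxy. unfold g.
  assert (E : z * (1 - y) / (1 - x) - z * y / x = z * (x - y) / (x * (1 - x))) by (field; lra).
  assert (P : 0 < z * (x - y) / (x * (1 - x))).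
  { apply Rdiv_lt_0_compat; apply Rmult_lt_0_compat; lra. }
  pose proof (div_nonneg z y x Hz ltac:(lra) ltac:(lra)).
  assert (hbar h (1 / (1 + z * y / x)) < hbar h (1 / (1 + z * (1 - y) / (1 - x)))).
  { apply hbar_santi; auto.
    - apply Rdiv_lt_0_compat; lra.
    - apply inv_santi; lra.
    - apply arg_le1; lra. }
  lra.
Qed.

Lemma g_cont h z x0 y : h_assumptions h -> 0 < z -> 0 < x0 < 1 -> 0 <= y <= 1 ->
  continuous (fun x => g h x y z) x0.
Proof.
  intros Hh Hz Hx Hy. unfold g.
  apply continuous_ext with (f := fun x => minus (hbar h (1 / (1 + z * y / x))) (hbar h (1 / (1 + z * (1 - y) / (1 - x))))).
  { intros; reflexivity. }
  refine (continuous_minus (K:=R_AbsRing) (V:=R_NormedModule) _ _ _ _ _).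
  - destruct (Req_dec y 0) as [->|Hne].
    + apply continuous_ext with (f := fun _ => hbar h 1).
      { intros t. f_equal. unfold Rdiv. rewrite Rmult_0_r, Rmult_0_l, Rplus_0_r, Rinv_1. ring. }
      apply continuous_const.
    + apply continuous_comp with (g := hbar h).
      * apply (ex_derive_continuous (fun x => 1 / (1 + z * y / x))). auto_derive.
        assert (0 < z * y / x0) by (apply Rdiv_lt_0_compat; [apply Rmult_lt_0_compat|]; lra).
        repeat split; lra.
      * apply hbar_cont; auto. apply arg_in.
        apply Rdiv_lt_0_compat; [apply Rmult_lt_0_compat|]; lra.
  - destruct (Req_dec y 1) as [->|Hne].
    + apply continuous_ext with (f := fun _ => hbar h 1).
      { intros t. f_equal. unfold Rdiv. rewrite Rminus_eq_0, Rmult_0_r, Rmult_0_l, Rplus_0_r, Rinv_1. ring. }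
      apply continuous_const.
    + apply continuous_comp with (g := hbar h).
      * apply (ex_derive_continuous (fun x => 1 / (1 + z * (1 - y) / (1 - x)))). auto_derive.
        assert (0 < z * (1 - y) / (1 - x0)) by (apply Rdiv_lt_0_compat; [apply Rmult_lt_0_compat|]; lra).
        replace (1 + - x0) with (1 - x0) by ring. unfold Rdiv in H. repeat split; lra.
      * apply hbar_cont; auto. apply arg_in.
        apply Rdiv_lt_0_compat; [apply Rmult_lt_0_compat|]; lra.
Qed.

Lemma q_le0 F u : u <= F 0 -> quantile F u <= 0.
Proof.
  intros Hu. unfold quantile.
  destruct (Glb_Rbar_correct (fun x => u <= F x)) as [lb _].
  assert (L : Rbar_le (Glb_Rbar (fun x => u <= F x)) 0) by (apply lb; auto).
  destruct (Glb_Rbar _); simpl in *; try lra; contradiction.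
Qed.

Lemma q_ge0 F u : (forall x y, x <= y -> F x <= F y) -> F 0 < u -> 0 <= quantile F u.
Proof.
  intros Hm Hu. unfold quantile.
  destruct (Glb_Rbar_correct (fun x => u <= F x)) as [_ glb].
  assert (L : Rbar_le 0 (Glb_Rbar (fun x => u <= F x))).
  { apply glb. intros x Hx. simpl. apply Rnot_lt_le. intros Hx0.
    pose proof (Hm x 0 ltac:(lra)). lra. }
  destruct (Glb_Rbar _); simpl in *; try lra; contradiction.
Qed.

Lemma q_F0 F : F_assumptions F -> quantile F (F 0) = 0.
Proof.
  intros [[Hm _] [_ [Hq H0]]].
  apply Rle_antisym; [apply q_le0; lra|].
  apply Rnot_lt_le. intros Hneg.
  pose proof (Hq (F 0) ltac:(lra)) as Hc.
  apply continuity_pt_filterlim in Hc.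
  destruct (Hc (- quantile F (F 0)) ltac:(lra)) as [d [Hd Hy]].
  set (u := F 0 + Rmin (d/2) ((1 - F 0)/2)).
  assert (Hp : 0 < Rmin (d/2) ((1 - F 0)/2)) by (apply Rmin_case; lra).
  assert (Hp2 : Rmin (d/2) ((1 - F 0)/2) <= d/2) by apply Rmin_l.
  assert (Hq0 : 0 <= quantile F u) by (apply q_ge0; auto; unfold u; lra).
  assert (Hd' : R_dist u (F 0) < d) by (unfold R_dist, u; rewrite Rabs_right; lra).
  assert (Hne : F 0 <> u) by (unfold u; lra).
  specialize (Hy u (conj (conj I Hne) Hd')). simpl in Hy. unfold R_dist in Hy.
  apply Rabs_def2 in Hy. lra.
Qed.

Lemma D_ctn F h z y x0 : F_assumptions F -> h_assumptions h -> 0 < z -> 0 < x0 < 1 -> 0 <= y <= 1 ->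
  ctn (fun x => quantile F (1 - x) - g h x y z) x0.
Proof.
  intros HF Hh Hz Hx Hy. apply cont_ctn.
  apply continuous_ext with (f := fun x => minus (quantile F (1 - x)) (g h x y z)).
  { intros; reflexivity. }
  refine (continuous_minus (K:=R_AbsRing) (V:=R_NormedModule) _ _ _ _ _).
  - apply continuous_comp with (g := quantile F).
    + apply (ex_derive_continuous (fun x => 1 - x)). auto_derive. auto.
    + destruct HF as [_ [_ [Hq _]]]. apply Hq. lra.
  - apply g_cont; auto.
Qed.

Theorem proposition2 (mu_w mu_m : R) (Fw Fm hw hm : R -> R) :
  0 < mu_w -> 0 < mu_m ->
  h_assumptions hw -> h_assumptions hm ->
  F_assumptions Fw -> F_assumptions Fm ->
  let r := mu_w / mu_m in
  let rew := 1 - Fw 0 in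
  let rem := 1 - Fm 0 in
  rew < rem ->
  (exists rw rm, equilibrium Fw Fm hw hm r rw rm /\
                 rw < rew /\ rew < rem /\ rem < rm) /\
  ~ (exists rw rm, equilibrium Fw Fm hw hm r rw rm /\
                   rew < rw /\ rw < rm /\ rm < rem).
Proof.
  intros Hmw Hmm Hhw Hhm HFw HFm r rew rem Hlt.
  assert (Hr : 0 < r) by (unfold r; apply Rdiv_lt_0_compat; lra).
  assert (Hz : 0 < 1 / r) by (apply Rdiv_lt_0_compat; lra).
  assert (Hrew : 0 < rew < 1) by (unfold rew; destruct HFw as [_ [_ [_ H]]]; lra).
  assert (Hrem : 0 < rem < 1) by (unfold rem; destruct HFm as [_ [_ [_ H]]]; lra).
  assert (Ew : 1 - rew = Fw 0) by (unfold rew; ring).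
  assert (Em : 1 - rem = Fm 0) by (unfold rem; ring).
  clearbody r rew rem.
  split.
  2:{ intros [rw [rm [Heq [H1 [H2 H3]]]]]. destruct Heq as [Hb1 [Hb2 [Hi _]]].
      specialize (Hi ltac:(lra)).
      pose proof (q_le0 Fw (1 - rw) ltac:(lra)).
      pose proof (g_pos hw (1 / r) rw rm Hhw Hz ltac:(lra) ltac:(lra) ltac:(lra)). lra. }
  set (Dw := fun y x => quantile Fw (1 - x) - g hw x y (1 / r)).
  set (Dm := fun y x => quantile Fm (1 - x) - g hm x y r).
  assert (BW : forall y, exists xs, rem <= y <= 1 -> charS (Dw y) 0 rew xs).
  { intros y. destruct (classic (rem <= y <= 1)) as [Hy|Hy]; [|exists 0; tauto].
    destruct (sup_zero (Dw y) 0 rew) as [xs Hxs]; [lra| | |exists xs; auto].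
    - intros x Hx. apply D_ctn; auto; lra.
    - unfold Dw. rewrite Ew. pose proof (q_le0 Fw (Fw 0) (Rle_refl _)).
      pose proof (g_pos hw (1 / r) rew y Hhw Hz ltac:(lra) ltac:(lra) ltac:(lra)). lra. }
  assert (BM : forall y, exists xs, 0 <= y <= rew -> charI (Dm y) rem 1 xs).
  { intros y. destruct (classic (0 <= y <= rew)) as [Hy|Hy]; [|exists 0; tauto].
    destruct (inf_zero (Dm y) rem 1) as [xs Hxs]; [lra| | |exists xs; auto].
    - intros x Hx. apply D_ctn; auto; lra.
    - unfold Dm. rewrite Em, q_F0 by auto.
      pose proof (g_neg hm r rem y Hhm Hr ltac:(lra) ltac:(lra) ltac:(lra)). lra. }
  destruct (my_choice _ BW) as [BRw HBRw].
  destruct (my_choice _ BM) as [BRm HBRm].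
  destruct (tarski (fun y => BRm (BRw y)) rem 1) as [ys [Hys Hfix]].
  - lra.
  - intros y Hy. destruct (HBRw y Hy) as [R1 _]. destruct (HBRm (BRw y) ltac:(lra)) as [R2 _]. lra.
  - intros y y' H1 H2 H3.
    assert (M1 : BRw y' <= BRw y).
    { apply (sup_mono (Dw y) (Dw y') 0 rew); [| apply HBRw; lra | apply HBRw; lra].
      intros x Hx. unfold Dw. pose proof (g_mono hw (1 / r) x y y' Hhw Hz ltac:(lra) ltac:(lra) H2 ltac:(lra)). lra. }
    destruct (HBRw y ltac:(lra)) as [R1 _]. destruct (HBRw y' ltac:(lra)) as [R1' _].
    apply (inf_mono (Dm (BRw y')) (Dm (BRw y)) rem 1); [| apply HBRm; lra | apply HBRm; lra].
    intros x Hx. unfold Dm. pose proof (g_mono hm r x (BRw y') (BRw y) Hhm Hr ltac:(lra) ltac:(lra) M1 ltac:(lra)). lra.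
  - simpl in Hfix.
    destruct (HBRw ys Hys) as [Rw Cw].
    destruct (HBRm (BRw ys) ltac:(lra)) as [Rm Cm]. rewrite Hfix in Rm, Cm.
    exists (BRw ys), ys. split; [|lra].
    unfold equilibrium. split; [lra|]. split; [lra|]. split; [|split; [|split; [|split; [|split]]]].
    + intros H. destruct Cw as [[E _]|[_ [Hz0 _]]]; [lra|]. unfold Dw in Hz0; cbv beta in Hz0; lra.
    + intros H. destruct Cm as [[E _]|[_ [Hz0 _]]]; [lra|]. unfold Dm in Hz0; cbv beta in Hz0; lra.
    + intros H0. destruct Cw as [[_ Hall]|[Hpos _]]; [|lra]. exists rew; split; [lra|].
      intros d Hd. specialize (Hall d ltac:(lra)). unfold Dw in Hall; cbv beta in Hall; lra.
    + intros H1. destruct Cm as [[_ Hall]|[Hl1 _]]; [|lra]. exists (1 - rem); split; [lra|].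
      intros d Hd. specialize (Hall (1 - d) ltac:(lra)). unfold Dm in Hall; cbv beta in Hall.
      replace (1 - (1 - d)) with d in Hall by ring. lra.
    + intros H1; lra.
    + intros H1; lra.
Qed.
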